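(* Let $\mathbb{K}\in\{\mathbb{R},\mathbb{C}\}$ and let $\mathcal{X}$ be an infinite-dimensional topological $\mathbb{K}$-vector space whose topological dual $\mathcal{X}^{\ast}$ separates the points of $\mathcal{X}$. Then $\mathbf{F}(\mathcal{X}^{\ast})$, endowed with the weak*-Hausdorff hypertopology, is not locally connected.
   Context: Topological vector spaces are Hausdorff. $\mathcal{X}^{\ast}$ carries the weak* topology. $\mathbf{F}(\mathcal{X}^{\ast})$ is the set of nonempty weak*-closed subsets of $\mathcal{X}^{\ast}$. The weak*-Hausdorff hypertopology on $\mathbf{F}(\mathcal{X}^{\ast})$ is the topology generated by the family of extended pseudometrics $d_H^{(A)}(F,\tilde F)=\max\{\sup_{\sigma\in F}\inf_{\tilde\sigma\in\tilde F}|(\sigma-\tilde\sigma)(A)|,\ \sup_{\tilde\sigma\in\tilde F}\inf_{\sigma\in F}|(\sigma-\tilde\sigma)(A)|\}\in[0,\infty]$, $A\in\mathcal{X}$. *)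

(* Defs.v *)
From HB Require Import structures.
From mathcomp Require Import all_boot all_order all_algebra.
From mathcomp Require Import all_classical all_reals all_analysis.
From mathcomp Require Import complex.

Set Implicit Arguments.
Unset Strict Implicit.
Unset Printing Implicit Defensive.

Import Order.TTheory GRing.Theory Num.Theory.
Import numFieldTopology.Exports.

Local Open Scope classical_set_scope.
Local Open Scope ring_scope.

Definition locally_connected (T : topologicalType) : Prop :=
  forall (x : T) (U : set T), nbhs x U ->
    exists V : set T, [/\ open V, V x, connected V & V `<=` U].

Section Hyperspace.
Variables (R : realType) (K : numFieldType) (nrm : K -> R).
Variable X : topologicalLmodType K.

Definition infinite_dimensional : Prop :=
  forall s : seq X, exists x : X,
    forall c : 'I_(size s) -> K, x <> \sum_(i < size s) c i *: s`_i.

Definition dual : set {ptws X -> K^o} :=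
  [set f | linear (f : X -> K^o) /\ continuous (f : X -> K^o)].

Definition dual_separates : Prop :=
  forall x y : X, x <> y -> exists2 f, dual f & f x <> f y.

(* Weak*-closed subsets of X^*: the weak* topology is the topology on X^*
   induced by the topology of pointwise convergence {ptws X -> K}, so F is
   weak*-closed in X^* iff F is contained in X^* and closure F meets X^* only
   in F. *)
Definition wstar_closed (F : set {ptws X -> K^o}) : Prop :=
  F `<=` dual /\ closure F `&` dual `<=` F.

Definition hyperset (F : set {ptws X -> K^o}) : Prop :=
  F !=set0 /\ wstar_closed F.

Definition hyper := {F : set {ptws X -> K^o} | hyperset F}.

Definition dH (A : X) (F G : set {ptws X -> K^o}) : \bar R :=
  maxe (ereal_sup [set ereal_inf [set (nrm (s A - t A))%:E | t in G] | s in F])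
       (ereal_sup [set ereal_inf [set (nrm (s A - t A))%:E | s in F] | t in G]).

Definition hball (A : X) (F : hyper) (e : R) : set hyper :=
  [set G | dH A (sval F) (sval G) < e%:E]%E.

Definition hsubbase : set (set hyper) :=
  [set B | exists A F e, 0 < e /\ B = hball A F e].

(* F(X^star) with the weak*-Hausdorff hypertopology: the topology generated
   by the family of extended pseudometrics d_H^(A), A in X, i.e. the
   topology with subbase the open d_H^(A)-balls. *)
(* (the type is indexed by the absolute value nrm so that the topology, which
   depends on nrm through d_H, is attached to it canonically) *)
Definition hyperspace_of (n : K -> R) : Type := hyper.
Notation hyperspace := (hyperspace_of nrm).
HB.instance Definition _ := gen_eqMixin hyperspace.
HB.instance Definition _ := gen_choiceMixin hyperspace.
HB.instance Definition _ := @isSubBaseTopological.Build hyperspace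
  (set hyperspace) (hsubbase : set (set hyperspace)) id.

End Hyperspace.

Notation hyperspace nrm X := (@hyperspace_of _ _ X nrm).

(* Main.v *)
Require Import Defs.
From HB Require Import structures.
From mathcomp Require Import all_boot all_order all_algebra.
From mathcomp Require Import all_classical all_reals all_analysis.
From mathcomp Require Import complex.
From mathcomp Require Import lra.
Import numFieldTopology.Exports.
Set Implicit Arguments.
Unset Strict Implicit.
Unset Printing Implicit Defensive.
Import Order.TTheory GRing.Theory Num.Theory.
Local Open Scope ring_scope.

Section LA.
Variable K : fieldType.

Lemma inspan n (l : seq 'rV[K]_n) v : v \in (span l) ->
  exists c : nat -> K, v = \sum_(i < size l) c i *: l`_i.
Proof.
case: l => [|x l] /=.
  rewrite span_nil memv0 => /eqP ->; exists (fun=> 0).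
  by rewrite big_ord0.
move=> H; exists (fun j => coord (in_tuple (x :: l)) (inord j) v).
rewrite {1}(@coord_span _ _ _ (in_tuple (x :: l)) v H); apply: eq_bigr => i _; by rewrite inord_val.
Qed.

Lemma fin_span (T : Type) n (f : T -> 'rV[K]_n) : exists ts : seq T,
  forall v, exists c : nat -> K,
    f v = \sum_(i < size ts) c i *: (map f ts)`_i.
Proof.
apply: contrapT => H.
have H' : forall ts, exists v, f v \notin (span (map f ts)).
  move=> ts; apply: contrapT => Hn; apply: H; exists ts => v.
  have : f v \in (span (map f ts)).
    by apply: contrapT => Hv; apply: Hn; exists v; apply/negP.
  move=> /inspan [c ->]; exists c; by rewrite size_map.
have : forall k, exists ts, (k <= \dim (span (map f ts)))%N.
  elim=> [|k [ts Hk]]; first by exists [::].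
  have [v Hv] := H' ts; exists (v :: ts) => /=.
  rewrite span_cons.
  have sub : ((span (map f ts)) <= <[f v]> + (span (map f ts)))%VS by apply: addvSr.
  apply: leq_ltn_trans Hk _.
  rewrite ltn_neqAle dimvS // andbT.
  have [_ ->] := dimv_leqif_eq sub.
  apply/negP => /eqP E; move: Hv; rewrite E.
  by move/negP; apply; apply: (subvP (addvSl _ _)); apply: memv_line.
move=> /(_ n.+1) [ts].
have := dimvS (subvf (span (map f ts))); rewrite dimvf dim_matrix mul1r.
move=> a b; have := leq_trans b a; by rewrite ltnn.
Qed.

End LA.
Local Open Scope classical_set_scope.

Section Dual.
Variables (K : numFieldType) (X : topologicalLmodType K).

Lemma lin_add (f : X -> K^o) : linear f -> forall u v, f (u + v) = f u + f v.
Proof. by move=> lf u v; have := lf 1 u v; rewrite scale1r => ->; rewrite [1 *: _]scale1r. Qed.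

Lemma lin0 (f : X -> K^o) : linear f -> f 0 = 0.
Proof. move=> lf; have := lin_add lf 0 0; rewrite addr0.
by move/(congr1 (fun z => z - f 0)); rewrite subrr addrK. Qed.

Lemma lin_scale (f : X -> K^o) : linear f -> forall a u, f (a *: u) = a * f u.
Proof. by move=> lf a u; have := lf a u 0; rewrite addr0 lin0 // addr0. Qed.

Lemma lin_sum (f : X -> K^o) m (c : nat -> K) (v : nat -> X) : linear f ->
  f (\sum_(i < m) c i *: v i) = \sum_(i < m) c i * f (v i).
Proof.
move=> lf; elim/big_ind2: _ => //; first exact: lin0.
  by move=> x1 y1 x2 y2 <- <-; rewrite lin_add.
by move=> i _; rewrite lin_scale.
Qed.

Lemma dual0 : dual (fun _ : X => (0 : K^o)).
Proof.
split.
  by move=> a u v /=; rewrite scaler0 addr0.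
exact: cst_continuous.
Qed.

Lemma dualD (f g : X -> K^o) : dual f -> dual g -> dual (fun x => f x + g x).
Proof.
move=> [lf cf] [lg cg]; split.
  move=> a u v /=; rewrite (lf a u v) (lg a u v).
  by rewrite /GRing.scale /= mulrDr; rewrite addrACA.
move=> x; exact: (continuousD (cf x) (cg x)).
Qed.

Lemma dualZ (c : K) (f : X -> K^o) : dual f -> dual (fun x => c * f x).
Proof.
move=> [lf cf]; split.
  move=> a u v /=; rewrite (lf a u v).
  by rewrite /GRing.scale /= mulrDr mulrCA.
move=> x; exact: (@continuousZl_tmp _ _ _ _ c _ (cf x)).
Qed.


Lemma dual_sum m (g : nat -> X -> K^o) : (forall i, dual (g i)) ->
  dual (fun x => \sum_(i < m) g i x).
Proof.
move=> dg; elim: m => [|m IH].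
  have -> : (fun x => \sum_(i < 0) g i x) = (fun=> 0 : K^o).
    by apply: funext => x; rewrite big_ord0.
  exact: dual0.
have -> : (fun x => \sum_(i < m.+1) g i x) =
          (fun x => \sum_(i < m) g i x + g m x).
  by apply: funext => x; rewrite big_ord_recr.
exact: dualD.
Qed.

End Dual.

Section Annihil.
Variables (K : numFieldType) (X : topologicalLmodType K).

Lemma annihil (s : seq X) : infinite_dimensional X -> dual_separates X ->
  exists sig : X -> K^o,
    [/\ dual sig, forall a, a \in s -> sig a = 0 & exists B, sig B != 0].
Proof.
move=> ID DS; apply: contrapT => Hn.
have Hc : forall sig : X -> K^o, dual sig ->
    (forall a, a \in s -> sig a = 0) -> forall x, sig x = 0.
  move=> sig ds zs x; apply: contrapT => nz; apply: Hn.
  by exists sig; split => //; exists x; apply/eqP.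
pose T := {sig : X -> K^o | dual sig}.
pose d : T := exist _ _ (@dual0 K X).
pose f : T -> 'rV[K]_(size s) := fun sig => \row_i (sval sig) s`_i.
have [ts Hts] := fin_span f.
pose t i := sval (nth d ts i).
have dt : forall i, dual (t i) by move=> i; exact: (svalP (nth d ts i)).
have Hrep : forall sig : X -> K^o, dual sig -> exists c : nat -> K,
    forall x, sig x = \sum_(i < size ts) c i * t i x.
  move=> sig ds; have [c Hc'] := Hts (exist _ sig ds); exists c.
  pose tau := fun x => sig x + (-1) * \sum_(i < size ts) c i * t i x.
  have dtau : dual tau.
    apply: dualD => //; apply: dualZ.
    by apply: (@dual_sum _ _ _ (fun i x => c i * t i x)) => i; apply: dualZ.
  have ztau : forall a, a \in s -> tau a = 0.
    move=> a aS; have jlt : (index a s < size s)%N by rewrite index_mem.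
    have := congr1 (fun M : 'rV[K]_(size s) => M 0 (Ordinal jlt)) Hc'.
    rewrite /f /= mxE summxE /= (nth_index 0 aS) => E.
    rewrite /tau E mulN1r.
    have -> : \sum_(i < size ts) (c i *: [seq \row_i0 (sval sig0) s`_i0 | sig0 <- ts]`_i) 0 (Ordinal jlt)
        = \sum_(i < size ts) c i * t i a.
      apply: eq_bigr => i _; rewrite mxE (nth_map d) // mxE /= (nth_index 0 aS) //.
    by rewrite subrr.
  move=> x; have := Hc tau dtau ztau x; rewrite /tau mulN1r => /eqP.
  by rewrite subr_eq0 => /eqP.
pose h : X -> 'rV[K]_(size ts) := fun x => \row_i t i x.
have [xs Hxs] := fin_span h.
have [x Hx] := ID xs.
have [c Hc2] := Hxs x.
apply: (Hx (fun i => c i)).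
apply: contrapT => nxy; have [sig ds Hs] := DS _ _ nxy; apply: Hs.
have [c' Hc'] := Hrep sig ds; rewrite !Hc'; apply: eq_bigr => i _.
congr (_ * _).
rewrite (lin_sum _ _ _ (dt i).1).
have := congr1 (fun M : 'rV[K]_(size ts) => M 0 i) Hc2.
rewrite /h mxE summxE => ->; apply: eq_bigr => j _.
by rewrite mxE (nth_map 0) // mxE.
Qed.

End Annihil.
From mathcomp Require Import finmap.
Section Top.
Variables (R : realType) (K : numFieldType) (nrm : K -> R).
Variable X : topologicalLmodType K.
Local Notation H := (hyperspace nrm X).

Lemma open_hball A (F : hyper X) e : 0 < e -> open (hball nrm A F e : set H).
Proof.
move=> e0; rewrite /open /=.
exists [set hball nrm A F e]; last by rewrite bigcup_set1.
move=> _ ->; apply: finI_from1; by exists A, F, e.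
Qed.

Lemma open_sub (V : set H) (Z : H) : open V -> V Z ->
  exists D : {fset set H}, [/\ {subset D <= @hsubbase R K nrm X},
    (\bigcap_(i in [set` D]) i) Z & \bigcap_(i in [set` D]) i `<=` V].
Proof.
rewrite /open /= => -[D' sD' <-] [B D'B BZ].
have [D sD eB] := sD' _ D'B.
exists D; split => //; first by rewrite -eB in BZ.
by move=> x Dx; exists B => //; rewrite -eB.
Qed.

Lemma closed_ev (x : X) : closed [set f : {ptws X -> K^o} | f x = 0].
Proof.
have -> : [set f : {ptws X -> K^o} | f x = 0] =
    (@proj X (fun _ => K^o) x) @^-1` [set (0 : K^o)] by [].
apply: preimage_closed.
  by move=> f _; apply: proj_continuous.
apply: accessible_closed_set1; apply: hausdorff_accessible.
exact: norm_hausdorff.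
Qed.

Lemma closure_ev (F : set {ptws X -> K^o}) x :
  (forall f, F f -> f x = 0) -> forall f, closure F f -> f x = 0.
Proof.
move=> HF f cf.
have sub : F `<=` [set f : {ptws X -> K^o} | f x = 0] by move=> g /HF.
have := closureS sub cf.
have /closure_id E := @closed_ev x.
by rewrite -E.
Qed.

Definition Zset : set {ptws X -> K^o} := [set f | forall x, f x = 0].
Definition Gset (s : seq X) : set {ptws X -> K^o} :=
  [set f | dual f /\ forall a, a \in s -> f a = 0].

Lemma Zset_dual f : Zset f -> dual f.
Proof.
move=> Zf; have -> : f = (fun _ => 0 : K^o) by apply: funext => x; apply: Zf.
exact: dual0.
Qed.

Lemma hyperZ : hyperset Zset.
Proof.
split; first by exists (fun _ => 0 : K^o).
split; first exact: Zset_dual.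
by move=> f [cf _] x; apply: (closure_ev (F := Zset)) => // g; apply.
Qed.

Lemma hyperG s : hyperset (Gset s).
Proof.
split; first by exists (fun _ => 0 : K^o); split => //; exact: dual0.
split; first by move=> f [].
move=> f [cf df]; split => // a aS.
by apply: (closure_ev (F := Gset s)) => // g [_]; apply.
Qed.

Lemma img0 (P : set {ptws X -> K^o}) A (T : Type) (E : K -> T) :
  P !=set0 -> (forall t, P t -> t A = 0) -> [set E (t A) | t in P] = [set E 0].
Proof.
move=> [t0 Pt0] HP; apply/seteqP; split => [_ [t Pt <-]|_ ->].
  by rewrite /= (HP t Pt).
by exists t0 => //; rewrite HP.
Qed.

Lemma dH_eq A F (P Q : set {ptws X -> K^o}) : P !=set0 -> Q !=set0 ->
  (forall t, P t -> t A = 0) -> (forall t, Q t -> t A = 0) ->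
  dH nrm A F P = dH nrm A F Q.
Proof.
move=> P0 Q0 HP HQ; rewrite /dH; congr maxe; congr ereal_sup.
  apply: eq_imagel => s _.
  rewrite (img0 (fun k => (nrm (s A - k))%:E) P0 HP).
  by rewrite (img0 (fun k => (nrm (s A - k))%:E) Q0 HQ).
rewrite (img0 (fun k => ereal_inf [set (nrm (s A - k))%:E | s in F]) P0 HP).
by rewrite (img0 (fun k => ereal_inf [set (nrm (s A - k))%:E | s in F]) Q0 HQ).
Qed.

End Top.

Section Main.
Variables (R : realType) (K : numFieldType) (nrm : K -> R).
Hypothesis n0 : nrm 0 = 0.
Hypothesis nN : forall x, nrm (- x) = nrm x.
Hypothesis nD : forall x y, nrm (x + y) <= nrm x + nrm y.
Hypothesis nunb : forall M : R, exists n : nat, M < nrm n%:R.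
Variable X : topologicalLmodType K.
Local Notation H := (hyperspace nrm X).

Definition Cset (B : X) : set H :=
  [set G | exists M, forall t, sval G t -> nrm (t B) <= M].

Lemma dH_self A (G : H) : (dH nrm A (sval G) (sval G) < 1%:E)%E.
Proof.
have le0 : forall (P : set {ptws X -> K^o}),
    (ereal_sup [set ereal_inf [set (nrm (s A - t A))%:E | t in P] | s in P] <= 0)%E.
  move=> P; apply/ereal_supP => _ [s Ps <-].
  apply: le_trans (ereal_inf_lbound _) _; first by exists s.
  by rewrite subrr n0.
have le0' : forall (P : set {ptws X -> K^o}),
    (ereal_sup [set ereal_inf [set (nrm (s A - t A))%:E | s in P] | t in P] <= 0)%E.
  move=> P; apply/ereal_supP => _ [s Ps <-].
  apply: le_trans (ereal_inf_lbound _) _; first by exists s.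
  by rewrite subrr n0.
rewrite /dH; apply: (le_lt_trans (y := 0%E)); last by rewrite lte_fin ltr01.
by rewrite ge_max le0 le0'.
Qed.

Lemma ball_nbhs B (G : H) : nbhs G (hball nrm B G 1).
Proof.
apply: open_nbhs_nbhs; split; first exact: open_hball ltr01.
exact: dH_self.
Qed.

Lemma open_C B : open (Cset B).
Proof.
rewrite openE => G [M HM]; rewrite /interior.
apply: filterS (ball_nbhs B G) => G'.
rewrite /hball /dH /= gt_max => /andP [_ h2].
exists (M + 1) => t G't.
have : (ereal_inf [set (nrm (s B - t B))%:E | s in sval G] < 1%:E)%E.
  apply: le_lt_trans h2; apply: ereal_sup_ubound; by exists t.
move=> /ereal_inf_lt [_ [s Gs <-]]; rewrite lte_fin => lt1.
have -> : t B = s B + (t B - s B) by rewrite addrC subrK.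
apply: le_trans (nD _ _) _; apply: lerD; first exact: HM.
by rewrite -opprB nN ltW.
Qed.

Lemma open_nC B : open (~` Cset B).
Proof.
rewrite openE => G nC; rewrite /interior.
apply: filterS (ball_nbhs B G) => G'.
rewrite /hball /dH /= gt_max => /andP [h1 _] [M HM]; apply: nC.
exists (M + 1) => s Gs; apply: contrapT => /negP; rewrite -ltNge => lt.
have : (ereal_inf [set (nrm (s B - t B))%:E | t in sval G'] < 1%:E)%E.
  apply: le_lt_trans h1; apply: ereal_sup_ubound; by exists s.
move=> /ereal_inf_lt [_ [t G't <-]]; rewrite lte_fin => lt1.
have : nrm (s B) <= nrm (s B - t B) + nrm (t B).
  by rewrite -{1}(subrK (t B) (s B)); apply: nD.
have := HM t G't.
move=> a b; clear -lt lt1 a b; lra.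
Qed.


Theorem gen_main : infinite_dimensional X -> dual_separates X ->
  ~ locally_connected H.
Proof.
move=> ID DS LC.
pose Z : H := exist _ (@Zset K X) (@hyperZ K X).
have [V [oV VZ cV _]] := LC Z setT filterT.
have [D [sD DZ DV]] := open_sub oV VZ.
have : forall b : set H, exists A : X, b \in D ->
    exists F e, 0 < e /\ b = hball nrm A F e.
  move=> b; case: (boolP (b \in D)) => bD; last by exists 0.
  have := sD _ bD; move=> /set_mem [A [F [e [e0 eb]]]].
  by exists A => _; exists F, e.
move=> /choice [getA HA].
pose s := [seq getA b | b <- D].
have [sig [ds zs [B nB]]] := annihil s ID DS.
pose G : H := exist _ (@Gset K X s) (@hyperG K X s).
have VG : V G.
  apply: DV => b Db.
  have [F [e [e0 eb]]] := HA b Db.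
  have := DZ b Db; rewrite eb /hball /=.
  have As : getA b \in s by apply: map_f.
  rewrite (dH_eq _ _ (P := @Zset K X) (Q := @Gset K X s)) //.
  - by exists (fun _ => 0 : K^o).
  - by exists (fun _ => 0 : K^o); split => //; exact: dual0.
  - by move=> t [_ ]; apply.
have CZ : Cset B Z by exists 0 => t Zt; rewrite Zt n0.
have nCG : ~ Cset B G.
  move=> [M HM]; have [n Hn] := nunb M.
  pose c := n%:R / sig B.
  have := HM (fun x => c * sig x); rewrite /c divfK // => H1.
  have : nrm n%:R <= M.
    apply: H1; split; first exact: dualZ.
    by move=> a aS /=; rewrite (zs a aS) mulr0.
  by rewrite leNgt Hn.
have := cV (V `&` Cset B).
have E : V `&` Cset B = V.
  apply: cV; first by exists Z.
    by exists (Cset B) => //; exact: open_C.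
  exists (Cset B) => //; rewrite -[Cset B]setCK closedC; exact: open_nC.
move=> _; apply: nCG; have : (V `&` Cset B) G by rewrite E.
by case.
Qed.

End Main.

Theorem corollary3p5 :
  (forall (R : realType) (X : topologicalLmodType R),
      hausdorff_space X -> infinite_dimensional X -> dual_separates X ->
      ~ locally_connected (hyperspace (@Num.norm R R) X)) /\
  (forall (R : realType) (X : topologicalLmodType R[i]),
      hausdorff_space X -> infinite_dimensional X -> dual_separates X ->
      ~ locally_connected (hyperspace (@ComplexField.Normc.normc R) X)).
Proof.
split.
- move=> R X _ ID DS; apply: (@gen_main R R (@Num.norm R R)) => //.
  + exact: normr0.
  + exact: normrN.
  + exact: ler_normD.
  + move=> M; exists (Num.Def.archi_bound `|M|).
    rewrite normr_nat; apply: le_lt_trans (ler_norm M) _.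
    exact: archi_boundP.
- move=> R X _ ID DS; apply: (@gen_main R R[i] (@ComplexField.Normc.normc R)) => //.
  + exact: ComplexField.Normc.normc0.
  + exact: normcN.
  + exact: le_normcD.
  + move=> M; exists (Num.Def.archi_bound `|M|).
    rewrite normcMn ComplexField.Normc.normc1.
    apply: le_lt_trans (ler_norm M) _.
    exact: archi_boundP.
Qed.
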